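(* Let $k,g,r_0$ be positive integers with $k\mid r_0$. For every DAG $G$ (for which the quantities are finite), $\mathrm{OPT}^{(k)}/\mathrm{OPT}^{(1)}\ge 1/k$, where $\mathrm{OPT}^{(1)}$ is the MPP optimum of $G$ with $1$ processor and fast memory $r=r_0$, and $\mathrm{OPT}^{(k)}$ is the MPP optimum of $G$ with $k$ processors and fast memory $r=r_0/k$ each (same $g$). Moreover, whenever $r_0/k\ge 2$, there exist DAGs for which $\mathrm{OPT}^{(k)}/\mathrm{OPT}^{(1)}=1/k$.
   Context: Multiprocessor red-blue pebbling (MPP). Input: a DAG $G=(V,E)$ with $n=|V|$ and positive integers $k$ (number of processors), $r$ (fast-memory size per processor), $g$ (cost of an I/O step). $\Delta_{in}$ denotes the maximum in-degree of $G$; sources/sinks are nodes of in-degree/out-degree $0$. A configuration is a tuple $(R^1,\dots,R^k,B)$ of subsets of $V$ ($R^j$ = nodes carrying a red pebble of processor $j$, $B$ = nodes carrying a blue pebble); it is valid if $|R^j|\le r$ for all $j$. The initial configuration has all sets empty; a configuration is terminal if every sink lies in $B\cup\bigcup_j R^j$. The transition rules are: (R1) for some $m\le k$, pairwise distinct processors $j_1,\dots,j_m$ and nodes $v_1,\dots,v_m$ with $v_i\in R^{j_i}$, add each $v_i$ to $B$ (cost $g$); (R2) for some $m\le k$, pairwise distinct processors $j_1,\dots,j_m$ and nodes $v_1,\dots,v_m\in B$, add each $v_i$ to $R^{j_i}$ (cost $g$); (R3) for some $m\le k$, pairwise distinct processors $j_1,\dots,j_m$ and nodes $v_1,\dots,v_m$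 such that every in-neighbor of $v_i$ lies in $R^{j_i}$, add each $v_i$ to $R^{j_i}$ (cost $1$); (R4) remove a single red or blue pebble (cost $0$). A pebbling strategy is a sequence of valid configurations starting at the initial configuration and ending at a terminal one, each obtained from its predecessor by one rule; its cost is the sum of the costs of the rules applied. $\mathrm{OPT}$ denotes the minimum cost of a pebbling strategy. Applications of (R1),(R2) are called I/O steps and applications of (R3) compute steps. *)

(* Defs.v *)
From mathcomp Require Import all_boot.
Set Implicit Arguments. Unset Strict Implicit. Unset Printing Implicit Defensive.

Section MPP.
Variable n : nat.
Notation V := 'I_n.
(* E u v  means there is an edge u -> v. *)
Variable E : rel V.

Definition dag : Prop := forall u v, E u v -> ~~ connect E v u.

Definition is_sink (v : V) : bool := [forall w, ~~ E v w].

Variables (k r g : nat).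

(* A configuration (R^1,...,R^k,B). *)
Definition config := ({ffun 'I_k -> {set V}} * {set V})%type.

Definition valid (C : config) : Prop := forall j, #|C.1 j| <= r.

Definition init_config : config := ([ffun _ => set0], set0).

Definition terminal (C : config) : Prop :=
  forall v, is_sink v -> (v \in C.2) \/ (exists j, v \in C.1 j).

(* A parallel move: a partial map from processors to nodes; the processors
   j with f j = Some v_j are the pairwise distinct processors j_1..j_m
   (m >= 1, automatically m <= k) and v_j the associated nodes. *)
Definition moves := 'I_k -> option V.

Definition nonempty_move (f : moves) : Prop := exists j, f j != None.

Definition added (f : moves) (j : 'I_k) : {set V} :=
  if f j is Some v then [set v] else set0.

Definition added_all (f : moves) : {set V} := \bigcup_j added f j.

Inductive step (C : config) : config -> nat -> Prop :=
| step_R1 (f : moves) :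
    nonempty_move f ->
    (forall j v, f j = Some v -> v \in C.1 j) ->
    step C (C.1, C.2 :|: added_all f) g
| step_R2 (f : moves) :
    nonempty_move f ->
    (forall j v, f j = Some v -> v \in C.2) ->
    step C ([ffun j => C.1 j :|: added f j], C.2) g
| step_R3 (f : moves) :
    nonempty_move f ->
    (forall j v, f j = Some v -> forall u, E u v -> u \in C.1 j) ->
    step C ([ffun j => C.1 j :|: added f j], C.2) 1
| step_R4_red (j : 'I_k) (v : V) :
    v \in C.1 j ->
    step C ([ffun i => if i == j then C.1 i :\ v else C.1 i], C.2) 0
| step_R4_blue (v : V) :
    v \in C.2 ->
    step C (C.1, C.2 :\ v) 0.

Inductive run : config -> nat -> Prop :=
| run_init : run init_config 0
| run_step C C' c d : run C c -> valid C' -> step C C' d -> run C' (c + d).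

Definition strategy_cost (c : nat) : Prop := exists C, run C c /\ terminal C.

(* OPT = o : o is the minimum cost of a pebbling strategy (in particular
   a pebbling strategy exists, i.e. OPT is finite). *)
Definition is_OPT (o : nat) : Prop :=
  strategy_cost o /\ forall c, strategy_cost c -> o <= c.

End MPP.

(* Main.v *)
Require Import Defs.
From mathcomp Require Import all_boot.
Set Implicit Arguments. Unset Strict Implicit. Unset Printing Implicit Defensive.

Section Sim.
Variables (n : nat) (E : rel 'I_n) (r0 g : nat).
Notation V := 'I_n.

Definition mk (R B : {set V}) : config n 1 := ([ffun _ => R], B).

Lemma card_bigcup_le k (F : 'I_k -> {set V}) r :
  (forall j, #|F j| <= r) -> #|\bigcup_j F j| <= k * r.
Proof.
move=> H.
have h1 : #|\bigcup_j F j| <= \sum_(j < k) #|F j|.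
  apply: (big_ind2 (fun (A : {set V}) m => #|A| <= m)).
  - by rewrite cards0.
  - move=> A a B b HA HB; apply: leq_trans (leq_card_setU A B) _.
    exact: leq_add.
  - by [].
apply: leq_trans h1 _.
apply: (@leq_trans (\sum_(j < k) r)); first by apply: leq_sum => j _; exact: H.
by rewrite sum_nat_const card_ord.
Qed.

Lemma run_step' k r (C C' C'' : config n k) c d :
  run E r g C c -> valid r C' -> step E g C C'' d -> C'' = C' -> run E r g C' (c + d).
Proof. by move=> H1 H2 H3 E3; subst C''; apply: run_step H1 H2 H3. Qed.

Lemma valid_mk (R B : {set V}) : #|R| <= r0 -> valid r0 (mk R B).
Proof. by move=> H j; rewrite /mk /= ffunE. Qed.

Lemma added_all1 (v : V) : added_all (fun _ : 'I_1 => Some v) = [set v].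
Proof.
apply/setP=> x; apply/bigcupP/idP.
  by case=> j _; rewrite /added.
by move=> Hx; exists ord0 => //.
Qed.

Lemma mk_add (R B : {set V}) (v : V) :
  [ffun j => (mk R B).1 j :|: added (fun _ : 'I_1 => Some v) j] = [ffun _ => R :|: [set v]].
Proof. by apply/ffunP=> j; rewrite !ffunE. Qed.

Lemma iter_red (B : {set V}) (Q : {set V} -> V -> Prop) cst :
  (forall (R : {set V}) v, Q R v -> step E g (mk R B) (mk (R :|: [set v]) B) cst) ->
  (forall (R R' : {set V}) v, R \subset R' -> Q R v -> Q R' v) ->
  forall vs (R : {set V}) c, run E r0 g (mk R B) c -> #|R :|: [set x in vs]| <= r0 ->
  (forall v, v \in vs -> Q R v) ->
  run E r0 g (mk (R :|: [set x in vs]) B) (c + size vs * cst).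
Proof.
move=> Hst Hmon; elim=> [|v vs IH] R c Hr Hc HQ.
  have -> : R :|: [set x in [::]] = R by apply/setP=> x; rewrite !inE orbF.
  by rewrite addn0.
have eq1 : R :|: [set x in v :: vs] = (R :|: [set v]) :|: [set x in vs].
  by apply/setP=> x; rewrite !inE orbA.
rewrite eq1 /= mulSn addnA.
apply: IH.
- apply: run_step Hr _ (Hst R v (HQ v (mem_head _ _))).
  apply: valid_mk; apply: leq_trans Hc; apply: subset_leq_card.
  by rewrite eq1 subsetUl.
- by rewrite -eq1.
- move=> w Hw; apply: Hmon (subsetUl _ _) _; apply: HQ.
  by rewrite inE Hw orbT.
Qed.

Lemma iter_blue (R : {set V}) :
  #|R| <= r0 ->
  forall vs B c, run E r0 g (mk R B) c ->
  (forall v, v \in vs -> v \in R) ->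
  run E r0 g (mk R (B :|: [set x in vs])) (c + size vs * g).
Proof.
move=> HR; elim=> [|v vs IH] B c Hr HQ.
  have -> : B :|: [set x in [::]] = B by apply/setP=> x; rewrite !inE orbF.
  by rewrite addn0.
have eq1 : B :|: [set x in v :: vs] = (B :|: [set v]) :|: [set x in vs].
  by apply/setP=> x; rewrite !inE orbA.
rewrite eq1 /= mulSn addnA.
apply: IH; last by move=> w Hw; apply: HQ; rewrite inE Hw orbT.
apply: run_step' Hr (valid_mk _ HR) _ _.
  apply: (@step_R1 _ _ _ _ _ (fun _ => Some v)); first by exists ord0.
  by move=> j w [<-]; rewrite /mk /= ffunE; apply: HQ; exact: mem_head.
by rewrite added_all1.
Qed.


Lemma added_allE k (f : moves n k) :
  added_all f = [set x in pmap f (enum 'I_k)].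
Proof.
apply/setP=> x; rewrite inE mem_pmap; apply/bigcupP/mapP.
  case=> j _; rewrite /added; case Hf: (f j) => [v|]; last by rewrite inE.
  by rewrite inE => /eqP ->; exists j; rewrite ?mem_enum.
case=> j _ Hf; exists j => //; by rewrite /added -Hf inE.
Qed.

Lemma size_pmap_le k (f : moves n k) : size (pmap f (enum 'I_k)) <= k.
Proof. by rewrite size_pmap; apply: leq_trans (count_size _ _) _; rewrite size_enum_ord. Qed.

Lemma in_pmap k (f : moves n k) v : v \in pmap f (enum 'I_k) -> exists j, f j = Some v.
Proof. by rewrite mem_pmap => /mapP [j _ Hj]; exists j. Qed.

Lemma U_add k (C : config n k) (f : moves n k) :
  \bigcup_j [ffun j => C.1 j :|: added f j] j = (\bigcup_j C.1 j) :|: [set x in pmap f (enum 'I_k)].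
Proof.
rewrite -added_allE; apply/setP=> x; rewrite inE.
apply/bigcupP/orP.
  case=> j _; rewrite ffunE inE => /orP [H|H].
    by left; apply/bigcupP; exists j.
  by right; apply/bigcupP; exists j.
case=> /bigcupP [j _ H]; exists j => //; by rewrite ffunE inE H ?orbT.
Qed.

Lemma sim k r (C : config n k) c : k * r <= r0 -> run E r g C c ->
  exists c', c' <= k * c /\ run E r0 g (mk (\bigcup_j C.1 j) C.2) c'.
Proof.
move=> Hkr; elim=> {C c} [|C C' c d Hrun [c' [Hc' IH]] Hval Hstep].
  exists 0; split => //.
  have -> : \bigcup_j (init_config n k).1 j = set0.
    by apply/setP=> x; rewrite inE; apply/bigcupP=> [[j _]]; rewrite ffunE inE.
  have -> : mk set0 (init_config n k).2 = init_config n 1.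
    by rewrite /mk /init_config.
  exact: run_init.
have HU' : #|\bigcup_j C'.1 j| <= r0 by apply: leq_trans (card_bigcup_le Hval) Hkr.
have HU : forall j, C.1 j \subset \bigcup_j C.1 j.
  by move=> j; apply/subsetP=> x Hx; apply/bigcupP; exists j.
case: Hstep HU' => [f Hne Hf|f Hne Hf|f Hne Hf|j v Hv|v Hv] /= HU'.
- exists (c' + size (pmap f (enum 'I_k)) * g); split.
    by rewrite mulnDr leq_add // leq_mul2r size_pmap_le orbT.
  rewrite added_allE.
  apply: iter_blue => // w /in_pmap [j Hj].
  by apply: (subsetP (HU j)); apply: Hf Hj.
- exists (c' + size (pmap f (enum 'I_k)) * g); split.
    by rewrite mulnDr leq_add // leq_mul2r size_pmap_le orbT.
  rewrite U_add in HU' *.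
  apply: (@iter_red C.2 (fun _ v => v \in C.2) g) => //.
  move=> R w Hw; have := (@step_R2 n E 1 g (mk R C.2) (fun _ => Some w)).
  rewrite mk_add; apply; first by exists ord0.
  by move=> j x [<-].
  by move=> w /in_pmap [j Hj]; exact: Hf Hj.
- exists (c' + size (pmap f (enum 'I_k)) * 1); split.
    by rewrite mulnDr leq_add // leq_mul2r size_pmap_le orbT.
  rewrite U_add in HU' *.
  apply: (@iter_red C.2 (fun R v => forall u, E u v -> u \in R) 1) => //.
  + move=> R w Hw; have := (@step_R3 n E 1 g (mk R C.2) (fun _ => Some w)).
    rewrite mk_add; apply; first by exists ord0.
    by move=> j x [<-] u Hu; rewrite /mk /= ffunE; apply: Hw.
  + by move=> R R' w HRR' Hw u Hu; apply: (subsetP HRR'); apply: Hw.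
  + move=> w /in_pmap [j Hj] u Hu; apply: (subsetP (HU j)); exact: Hf Hj u Hu.
- set U' := \bigcup_j0 _.
  have HU'U : U' \subset \bigcup_j0 C.1 j0.
    apply/subsetP=> x /bigcupP [i _]; rewrite ffunE; case: ifP => _ H.
      by apply/bigcupP; exists i => //; move: H; rewrite inE => /andP [].
    by apply/bigcupP; exists i.
  case Hvin: (v \in U').
    exists c'; split; first by rewrite addn0.
    suff -> : U' = \bigcup_j0 C.1 j0 by [].
    apply/eqP; rewrite eqEsubset HU'U; apply/subsetP=> x /bigcupP [i _ Hx].
    case Hxv: (x == v); first by move/eqP: Hxv => ->.
    apply/bigcupP; exists i => //; rewrite ffunE; case: ifP => // /eqP Hij.
    by subst i; rewrite in_setD1 Hxv Hx.
  exists c'; split; first by rewrite addn0.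
  have EU : U' = (\bigcup_j0 C.1 j0) :\ v.
    apply/eqP; rewrite eqEsubset; apply/andP; split.
      apply/subsetP=> x Hx; rewrite inE (subsetP HU'U _ Hx) andbT.
      by rewrite in_set1; apply/negP => /eqP Hxv; rewrite -Hxv Hx in Hvin.
    apply/subsetP=> x; rewrite inE => /andP [Hxv /bigcupP [i _ Hx]].
    apply/bigcupP; exists i => //; rewrite ffunE; case: ifP => // /eqP Hij.
    by rewrite inE Hxv; subst i.
  rewrite EU in HU' *; rewrite -(addn0 c').
  apply: run_step' IH (valid_mk _ _) (@step_R4_red n E 1 g _ ord0 v _) _.
  + by rewrite -EU.
  + by rewrite /mk /= ffunE; apply: (subsetP (HU j)).
  + by rewrite /mk; congr pair; apply/ffunP=> i; rewrite !ffunE (ord1 i) eqxx.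
- exists c'; split; first by rewrite addn0.
  rewrite -(addn0 c').
  have HUr : #|\bigcup_j C.1 j| <= r0.
    by move: HU'.
  have S := (@step_R4_blue n E 1 g (mk (\bigcup_j C.1 j) C.2) v Hv).
  have H := run_step' IH (@valid_mk _ (C.2 :\ v) HUr) S erefl.
  exact H.
Qed.

Lemma sim_terminal k (C : config n k) :
  terminal E C -> terminal E (mk (\bigcup_j C.1 j) C.2).
Proof.
move=> HT v Hs; case: (HT v Hs) => [H|[j H]]; [by left|right].
by exists ord0; rewrite /mk /= ffunE; apply/bigcupP; exists j.
Qed.

End Sim.

Lemma lb1 n (E : rel 'I_n) r g (C : config n 1) c :
  run E r g C c -> #|C.1 ord0 :|: C.2| <= c.
Proof.
elim=> {C c} [|C C' c d _ IH _ Hstep].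
  by rewrite /init_config /= ffunE setU0 cards0.
case: Hstep => [f _ Hf|f _ Hf|f _ Hf|j v Hv|v Hv] /=.
- apply: leq_trans (leq_addr _ _); apply: leq_trans IH.
  apply: subset_leq_card; apply/subsetP=> x; rewrite !inE => /or3P [H|H|H].
  + by rewrite H.
  + by rewrite H orbT.
  + move/bigcupP: H => [j _]; rewrite /added; case Hj: (f j) => [w|]; last by rewrite inE.
    rewrite inE => /eqP ->; rewrite (ord1 j) in Hj; by rewrite (Hf _ _ Hj).
- apply: leq_trans (leq_addr _ _); apply: leq_trans IH.
  apply: subset_leq_card; apply/subsetP=> x; rewrite ffunE !inE -orbA => /or3P [H|H|H].
  + by rewrite H.
  + move: H; rewrite /added; case Hj: (f ord0) => [w|]; last by rewrite inE.
    by rewrite inE => /eqP ->; rewrite (Hf _ _ Hj) orbT.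
  + by rewrite H orbT.
- rewrite ffunE.
  apply: (@leq_trans (#|C.1 ord0 :|: C.2| + #|added f ord0|)).
    apply: leq_trans (leq_card_setU _ _); apply: subset_leq_card.
    by apply/subsetP=> x; rewrite !inE; case/orP=> [/orP [->|->]|->]; rewrite ?orbT.
  apply: leq_add => //; rewrite /added; case: (f ord0) => [w|]; by rewrite ?cards1 ?cards0.
- apply: leq_trans (leq_addr _ _); apply: leq_trans IH.
  apply: subset_leq_card; apply/subsetP=> x; rewrite ffunE /= (ord1 j) eqxx !inE.
  by case/orP=> [/andP [_ ->]|->]; rewrite ?orbT.
- apply: leq_trans (leq_addr _ _); apply: leq_trans IH.
  apply: subset_leq_card; apply/subsetP=> x; rewrite !inE.
  by case/orP=> [->|/andP [_ ->]]; rewrite ?orbT.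
Qed.

Lemma lb_term n (E : rel 'I_n) (C : config n 1) :
  (forall v, is_sink E v) -> terminal E C -> n <= #|C.1 ord0 :|: C.2|.
Proof.
move=> Hs HT; rewrite -{1}(card_ord n) -cardsT; apply: subset_leq_card.
apply/subsetP=> v _; rewrite inE; case: (HT v (Hs v)) => [->|[j]]; first by rewrite orbT.
by rewrite (ord1 j) => ->.
Qed.

Lemma part1 (k g r0 : nat) n (E : rel 'I_n) (opt1 optk : nat) :
  is_OPT E 1 r0 g opt1 -> is_OPT E k (r0 %/ k) g optk -> opt1 <= k * optk.
Proof.
move=> [_ H1] [[C [Hr HT]] _].
have Hkr : k * (r0 %/ k) <= r0 by rewrite mulnC leq_trunc_div.
have [c' [Hc' Hrun]] := sim Hkr Hr.
apply: leq_trans Hc'; apply: H1.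
by exists (mk (\bigcup_j C.1 j) C.2); split => //; apply: sim_terminal.
Qed.

Definition E0 k : rel 'I_k := [rel u v | false].
Arguments E0 k : clear implicits.

Lemma part2 (k g r0 : nat) : 0 < k -> 1 <= r0 %/ k ->
  is_OPT (E0 k) 1 r0 g k /\ is_OPT (E0 k) k (r0 %/ k) g 1.
Proof.
move=> Hk Hr.
have Hs : forall v, is_sink (E0 k) v by move=> v; apply/forallP.
have Hkr : k * (r0 %/ k) <= r0 by rewrite mulnC leq_trunc_div.
pose f : moves k k := fun j => Some j.
have Hrun : run (E0 k) (r0 %/ k) g
   ([ffun j => (init_config k k).1 j :|: added f j], (init_config k k).2) (0 + 1).
  apply: run_step; first exact: run_init.
    by move=> j /=; rewrite !ffunE set0U /added /f cards1.
  apply: step_R3; first by exists (Ordinal Hk).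
  by [].
have HT : terminal (E0 k) ([ffun j => (init_config k k).1 j :|: added f j], (init_config k k).2).
  by move=> v _; right; exists v; rewrite !ffunE /added /f set0U set11.
have lbk : forall c, strategy_cost (E0 k) 1 r0 g c -> k <= c.
  move=> c [C [HC HCT]]; apply: leq_trans (lb1 HC).
  exact: lb_term Hs HCT.
have [c' [Hc' Hrun1]] := sim Hkr Hrun.
have Ec' : c' = k.
  apply/eqP; rewrite eqn_leq; rewrite add0n muln1 in Hc'; rewrite Hc' /=.
  apply: lbk; eexists; split; first exact: Hrun1.
  exact: sim_terminal.
split.
  split => //; exists (mk (\bigcup_j ([ffun j => (init_config k k).1 j :|: added f j], (init_config k k).2).1 j) (init_config k k).2).
  by rewrite Ec' in Hrun1; split => //; apply: sim_terminal.
split; first by exists ([ffun j => (init_config k k).1 j :|: added f j], (init_config k k).2).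
move=> c [C [HC HCT]].
have [c1 [Hc1 Hr1]] := sim Hkr HC.
have Hk1 : k <= c1.
  apply: lbk; exists (mk (\bigcup_j C.1 j) C.2); split => //; exact: sim_terminal.
case: c HC HCT Hc1 => [|c] // _ _; rewrite muln0 leqn0 => /eqP e1.
by move: Hk1; rewrite e1 leqn0 => /eqP Hk0; rewrite Hk0 in Hk.
Qed.

Theorem lemma8 (k g r0 : nat) :
  0 < k -> 0 < g -> 0 < r0 -> k %| r0 ->
  (forall (n : nat) (E : rel 'I_n) (opt1 optk : nat),
      dag E ->
      is_OPT E 1 r0 g opt1 ->
      is_OPT E k (r0 %/ k) g optk ->
      opt1 <= k * optk)
  /\
  (2 <= r0 %/ k ->
   exists (n : nat) (E : rel 'I_n) (opt1 optk : nat),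
     [/\ dag E, is_OPT E 1 r0 g opt1, is_OPT E k (r0 %/ k) g optk,
         0 < opt1 & opt1 = k * optk]).
Proof.
move=> Hk _ _ _; split.
  by move=> n E opt1 optk _; apply: part1.
move=> H2.
have [A B] := @part2 k g r0 Hk (ltnW H2).
exists k, (E0 k), k, 1; split; [by move=> u v | exact: A | exact: B | exact: Hk | by rewrite muln1].
Qed.
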